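(* Let $k\ge2$ and let $L$ be a subspace of $\bigwedge^{k}V$ such that $e_{1}\wedge e_{2}\wedge\bigwedge^{k-2}V\subseteq L$ and $e_1\wedge e_2\wedge x=0$ for all $x\in L$. Suppose $N_{j\to i}L=L$ for all $i<j$ with $i,j\geq3$. Then there are pairwise linearly independent vectors $w_{1},\dots,w_{m}$ in the span of $e_{1},e_{2}$ and subspaces $K_{1},\dots,K_{m}$ of $\bigwedge^{k-1}V^{(\{1,2\})}$ such that \[ L=e_{1}\wedge e_{2}\wedge\bigwedge^{k-2}V+\sum_{i=1}^m w_{i}\wedge K_{i}, \] and moreover: (1) for all distinct $i,j\in[m]$, $K_{i}\cap K_{j}=\bigcap_{h=1}^m K_{h}$; (2) each $K_{i}$, as well as $\bigcap_{h}K_{h}$, has a basis of monomials whose variable sets form a shifted set system (with respect to $\{3,\dots,n\}$).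
   Context: $\mathbb{F}$ is a field (assumed throughout the paper, for expository purposes, to have characteristic not $2$), $V$ is an $n$-dimensional $\mathbb{F}$-vector space with a fixed basis $e_1,\dots,e_n$, and $\bigwedge V$ its exterior algebra; for $S=\{s_1<\cdots<s_r\}\subseteq[n]$, the monomial $e_S=e_{s_1}\wedge\cdots\wedge e_{s_r}$ has variable set $S$. For $J\subseteq[n]$, $V^{(J)}$ is the span of $\{e_h:h\notin J\}$, $V^{(j)}=V^{(\{j\})}$, and $\bigwedge V^{(J)}$ is viewed as a subalgebra of $\bigwedge V$. Slow shift: for distinct $i,j\in[n]$ and nonzero $m\in\bigwedge^kV$, write uniquely $m=x+e_j\wedge y$ with $x\in\bigwedge^kV^{(j)}$, $y\in\bigwedge^{k-1}V^{(j)}$, and set $N_{j\to i}m=x+e_i\wedge y$ if this is nonzero, and $N_{j\to i}m=e_j\wedge y$ otherwise (the limit as $t\to0$ of the projective action of the linear map $e_j\mapsto e_i+te_j$ fixing the other $e_h$). For a subspace $L$, $N_{j\to i}L$ is the span of $\{N_{j\to i}m:m\in L\setminus\{0\}\}$. A family $\mathcal{F}$ of subsets of $\{3,\dots,n\}$ is shifted (with respect to $\{3,\dots,n\}$) if for all $3\le i<j$ and every $F\in\mathcal{F}$ with $j\in F$, $i\notin F$, also $(F\setminus\{j\})\cup\{i\}\in\mathcal{F}$. *)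

(* Defs.v *)
From HB Require Import structures.
From mathcomp Require Import all_boot all_order all_algebra.
Set Implicit Arguments. Unset Strict Implicit. Unset Printing Implicit Defensive.
Import Order.TTheory GRing.Theory Num.Theory.
Local Open Scope ring_scope.

(* Exterior algebra of V = F^d with basis e_0, ..., e_(d-1) (0-indexed: the
   paper's e_1, e_2 are our e_0, e_1, and the paper's {3,...,n} is our
   {i | 2 <= i}).  An element of /\V is its coefficient function on the
   monomials e_S, S : {set 'I_d}. *)
Section Exterior.
Variables (F : fieldType) (d : nat).

Definition ext := {ffun {set 'I_d} -> F^o}.

Definition mono (S : {set 'I_d}) : ext := [ffun T => (T == S)%:R].

(* e_S /\ e_T = (-1)^#{(s,t) in S x T | t < s} e_(S u T) if S, T disjoint, else 0 *)
Definition wsign (S T : {set 'I_d}) : F :=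
  (-1) ^+ #|[set p : 'I_d * 'I_d | (p.1 \in S) && (p.2 \in T) && (p.2 < p.1)%N]|.

Definition wmono (S T : {set 'I_d}) : ext :=
  if [disjoint S & T] then wsign S T *: mono (S :|: T) else 0.

Definition wedge (u v : ext) : ext :=
  \sum_(S : {set 'I_d}) \sum_(T : {set 'I_d}) (u S * v T) *: wmono S T.

Definition evec (h : 'I_d) : ext := mono [set h].

Definition homog (k : nat) (v : ext) : Prop := forall S : {set 'I_d}, #|S| != k -> v S = 0.

Definition Lam (k : nat) : {vspace ext} :=
  <<[seq mono X | X <- enum [set X : {set 'I_d} | #|X| == k]]>>%VS.

Definition LamAvoid (J : {set 'I_d}) (k : nat) : {vspace ext} :=
  <<[seq mono X | X <- enum [set X : {set 'I_d} | (#|X| == k) && [disjoint X & J]]]>>%VS.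

Definition wedge_sp (w : ext) (K : {vspace ext}) : {vspace ext} :=
  <<[seq wedge w x | x <- vbasis K]>>%VS.

(* Slow shift N_{j -> i}: write m = x + e_j /\ y with x, y free of e_j;
   N m = x + e_i /\ y if nonzero, else e_j /\ y. *)
Definition shift_x (j : 'I_d) (m : ext) : ext :=
  [ffun X : {set 'I_d} => if j \in X then 0 else m X].
Definition shift_y (j : 'I_d) (m : ext) : ext :=
  [ffun X : {set 'I_d} => if j \in X then 0 else wsign [set j] X * m (j |: X)].
Definition slow_shift (j i : 'I_d) (m : ext) : ext :=
  let z := shift_x j m + wedge (evec i) (shift_y j m) in
  if z != 0 then z else wedge (evec j) (shift_y j m).

Definition in_shift_span (j i : 'I_d) (L : {vspace ext}) (v : ext) : Prop :=
  exists s : seq ext, (forall m, m \in s -> (m \in L) && (m != 0)) /\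
                      v \in <<map (slow_shift j i) s>>%VS.

Definition shift_fixed (j i : 'I_d) (L : {vspace ext}) : Prop :=
  forall v, in_shift_span j i L v <-> v \in L.

Definition shifted (Fam : {set {set 'I_d}}) : Prop :=
  (forall S, S \in Fam -> forall h : 'I_d, h \in S -> (2 <= h)%N) /\
  (forall S, S \in Fam -> forall i j : 'I_d, (2 <= i)%N -> (i < j)%N ->
     j \in S -> i \notin S -> S :\ j :|: [set i] \in Fam).

Definition shifted_monomial_basis (U : {vspace ext}) : Prop :=
  exists Fam : {set {set 'I_d}},
    basis_of U [seq mono X | X <- enum Fam] /\ shifted Fam.

End Exterior.

(* Main.v *)
Require Import Defs.
From HB Require Import structures.
From mathcomp Require Import all_boot all_order all_algebra.
Import Order.TTheory GRing.Theory Num.Theory.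
Local Open Scope ring_scope.
Section Basic.
Variables (F : fieldType) (d : nat).
Local Notation ext := (ext F d).
Implicit Types (u v w : ext) (A B X Y S T : {set 'I_d}).

Lemma monoE A X : mono F A X = (X == A)%:R.
Proof. by rewrite ffunE. Qed.

Lemma wsign_sq A B : wsign F A B * wsign F A B = 1.
Proof. by rewrite /wsign -exprMn mulrNN mulr1 expr1n. Qed.

Lemma wsign_neq0 A B : wsign F A B != 0.
Proof. by rewrite /wsign expf_neq0 // oppr_eq0 oner_eq0. Qed.

Lemma wmonoE A B X : wmono F A B X =
  if [disjoint A & B] && (X == A :|: B) then wsign F A B else 0.
Proof.
rewrite /wmono; case: ifP => _ /=; last by rewrite ffunE.
rewrite ffunE monoE.
by case: (X == A :|: B) => /=; [exact: mulr1 | exact: mulr0].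
Qed.

Lemma wedgeE u v X :
  wedge u v X = \sum_S \sum_T u S * v T * wmono F S T X.
Proof.
rewrite /wedge sum_ffunE; apply: eq_bigr => S _.
by rewrite sum_ffunE; apply: eq_bigr => T _; rewrite ffunE.
Qed.

Lemma wedgeDr u v1 v2 : wedge u (v1 + v2) = wedge u v1 + wedge u v2.
Proof.
rewrite /wedge -big_split; apply: eq_bigr => S _ /=.
rewrite -big_split; apply: eq_bigr => T _ /=.
by rewrite ffunE mulrDr scalerDl.
Qed.

Lemma wedgeZr u a v : wedge u (a *: v) = a *: wedge u v.
Proof.
rewrite /wedge scaler_sumr; apply: eq_bigr => S _ /=.
rewrite scaler_sumr; apply: eq_bigr => T _ /=.
rewrite ffunE scalerA; congr (_ *: _); exact: mulrCA.
Qed.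

Lemma wedge0r u : wedge u 0 = 0.
Proof. by rewrite /wedge big1 // => S _; apply: big1 => T _; rewrite ffunE mulr0 scale0r. Qed.

Lemma wedgeDl u1 u2 v : wedge (u1 + u2) v = wedge u1 v + wedge u2 v.
Proof.
rewrite /wedge -big_split; apply: eq_bigr => S _ /=.
rewrite -big_split; apply: eq_bigr => T _ /=.
by rewrite ffunE mulrDl scalerDl.
Qed.

Lemma wedgeZl a u v : wedge (a *: u) v = a *: wedge u v.
Proof.
rewrite /wedge scaler_sumr; apply: eq_bigr => S _ /=.
rewrite scaler_sumr; apply: eq_bigr => T _ /=.
rewrite ffunE scalerA; congr (_ *: _); exact: esym (mulrA _ _ _).
Qed.

Lemma wedgeBr u v1 v2 : wedge u (v1 - v2) = wedge u v1 - wedge u v2.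
Proof. by rewrite wedgeDr -scaleN1r wedgeZr scaleN1r. Qed.

Lemma wedge_sumr u I (r : seq I) (P : pred I) (f : I -> ext) :
  wedge u (\sum_(i <- r | P i) f i) = \sum_(i <- r | P i) wedge u (f i).
Proof. exact: (big_morph _ (wedgeDr u) (wedge0r u)). Qed.

Lemma wedge_mono2 A B : wedge (mono F A) (mono F B) = wmono F A B.
Proof.
rewrite /wedge (bigD1 A) //= [X in _ + X]big1 => [|S nSA]; last first.
  by apply: big1 => T _; rewrite monoE (negbTE nSA) mul0r scale0r.
rewrite addr0 (bigD1 B) //= [X in _ + X]big1 => [|T nTB]; last first.
  by rewrite !monoE (negbTE nTB) mulr0 scale0r.
by rewrite addr0 !monoE !eqxx mulr1 scale1r.
Qed.

Lemma wedge_monoE A v X : wedge (mono F A) v X =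
  if A \subset X then wsign F A (X :\: A) * v (X :\: A) else 0.
Proof.
rewrite wedgeE (bigD1 A) //= [X in _ + X]big1 => [|S nSA]; last first.
  by apply: big1 => T _; rewrite monoE (negbTE nSA) !mul0r.
rewrite addr0; case: ifP => AX.
  rewrite (bigD1 (X :\: A)) //= [X in _ + X]big1 => [|T nT].
    rewrite addr0 wmonoE monoE eqxx mul1r.
    have -> : [disjoint A & X :\: A].
      by rewrite -setI_eq0; apply/eqP/setP => t; rewrite !inE; case: (t \in A); rewrite ?andbF.
    have -> : X == A :|: X :\: A.
      apply/eqP/setP => t; rewrite !inE; case tA: (t \in A); rewrite ?andbT //=.
      by rewrite (subsetP AX).
    by rewrite /= mulrC.
  rewrite wmonoE; case: ifP => [/andP[dis /eqP XE]|]; last by rewrite !mulr0.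
  case/eqP: nT; rewrite XE; apply/setP => t; rewrite !inE.
  by case tA: (t \in A) => //=; rewrite (disjointFr dis tA).
apply: big1 => T _; rewrite wmonoE; case: ifP => [/andP[dis /eqP XE]|]; last by rewrite !mulr0.
by move: AX; rewrite XE subsetUl.
Qed.

Lemma wedge_evecE h v X : wedge (evec F h) v X =
  if h \in X then wsign F [set h] (X :\ h) * v (X :\ h) else 0.
Proof. by rewrite /evec wedge_monoE sub1set. Qed.

End Basic.
Section Shift.
Variables (F : fieldType) (d : nat).
Local Notation ext := (ext F d).
Implicit Types (u v w m : ext) (A B X Y S T : {set 'I_d}).

Lemma shift_xE j m X : shift_x j m X = if j \in X then 0 else m X.
Proof. by rewrite ffunE. Qed.

Lemma shift_yE j m X : shift_y j m X =
  if j \in X then 0 else wsign F [set j] X * m (j |: X).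
Proof. by rewrite ffunE. Qed.

Lemma wedge_evec_out h v X : h \notin X -> wedge (evec F h) v X = 0.
Proof. by move=> hX; rewrite wedge_evecE (negbTE hX). Qed.

Lemma shift_decomp j m : m = shift_x j m + wedge (evec F j) (shift_y j m).
Proof.
apply/ffunP => X; rewrite ffunE shift_xE wedge_evecE.
case: ifP => jX; last by rewrite addr0.
rewrite add0r shift_yE !inE eqxx /= mulrA wsign_sq mul1r.
by rewrite setD1K.
Qed.

Lemma shift_fixed_in (L : {vspace ext}) j i :
  shift_fixed j i L -> forall v, v \in L -> v != 0 -> slow_shift j i v \in L.
Proof.
move=> H v vL vn0; apply/H; exists [:: v]; split; last exact: memv_span1.
by move=> m; rewrite inE => /eqP ->; rewrite vL vn0.
Qed.

Lemma shift_z_in (L : {vspace ext}) i j :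
  (forall v, v \in L -> v != 0 -> slow_shift j i v \in L) ->
  forall m, m \in L -> shift_x j m + wedge (evec F i) (shift_y j m) \in L.
Proof.
move=> HN m mL; set y := shift_y j m; set x := shift_x j m.
have [z0|zn0] := eqVneq (x + wedge (evec F i) y) 0; first by rewrite z0 mem0v.
have mn0 : m != 0.
  apply: contra zn0 => /eqP m0.
  have -> : x = 0 by apply/ffunP => X; rewrite /x shift_xE m0 !ffunE; case: ifP.
  have -> : y = 0 by apply/ffunP => X; rewrite /y shift_yE m0 !ffunE; case: ifP => // _; rewrite mulr0.
  by rewrite wedge0r addr0.
have := HN m mL mn0; rewrite /slow_shift -/x -/y /=.
by rewrite zn0.
Qed.

Lemma shift_x_in (L : {vspace ext}) i j : i != j ->
  (forall v, v \in L -> v != 0 -> slow_shift j i v \in L) ->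
  forall m, m \in L -> shift_x j m \in L.
Proof.
move=> nij HN m mL.
set y := shift_y j m; set x := shift_x j m.
have dec : m = x + wedge (evec F j) y by exact: shift_decomp.
have zL : x + wedge (evec F i) y \in L by exact: shift_z_in.
have key : forall X, j \in X -> wedge (evec F i) y X = 0.
  move=> X jX; rewrite wedge_evecE; case: ifP => // iX.
  by rewrite /y shift_yE !inE eq_sym nij jX /= mulr0.
set m' := wedge (evec F j) y - wedge (evec F i) y.
have m'L : m' \in L.
  have -> : m' = m - (x + wedge (evec F i) y).
    by rewrite {1}dec /m' opprD addrACA subrr add0r.
  by rewrite memvB.
have sx' : shift_x j m' = - wedge (evec F i) y.
  apply/ffunP => X; rewrite shift_xE !ffunE; case: ifP => jX.
    by rewrite key // oppr0.
  by rewrite wedge_evec_out ?jX // sub0r.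
have sy' : shift_y j m' = y.
  apply/ffunP => X; rewrite shift_yE; case: ifP => jX.
    by rewrite /y shift_yE jX.
  rewrite !ffunE key ?setU11 // subr0 wedge_evecE setU11 setU1K ?jX //.
  by rewrite mulrA wsign_sq mul1r /y shift_yE jX.
have ejyL : wedge (evec F j) y \in L.
  have [h0|hn0] := eqVneq m' 0.
    have -> : wedge (evec F j) y = 0; last by rewrite mem0v.
    apply/ffunP => X; rewrite [RHS]ffunE.
    case: (boolP (j \in X)) => jX; last by rewrite wedge_evec_out.
    move/ffunP: h0 => /(_ X); rewrite !ffunE key // subr0 => ->.
    by [].
  have := HN m' m'L hn0; rewrite /slow_shift sx' sy' /=.
  by rewrite addNr eqxx.
have -> : x = m - wedge (evec F j) y by rewrite {1}dec addrK.
by rewrite memvB.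
Qed.

End Shift.
Section Span.
Variables (F : fieldType) (d : nat).
Local Notation ext := (ext F d).
Implicit Types (u v w m : ext) (A B X Y S T : {set 'I_d}).
Implicit Types (Fam : {set {set 'I_d}}).

Definition monos (Fam : {set {set 'I_d}}) : seq ext :=
  [seq mono F X | X <- enum Fam].

Lemma ext_decomp v : v = \sum_Y v Y *: mono F Y.
Proof.
apply/ffunP => X; rewrite sum_ffunE (bigD1 X) //= [X in _ + X]big1 => [|Y nY].
  by rewrite addr0 ffunE monoE eqxx; exact: (esym (mulr1 _)).
by rewrite ffunE monoE eq_sym (negbTE nY); exact: mulr0.
Qed.

Lemma span_coordP (s : seq ext) (P : ext -> Prop) :
  P 0 -> (forall a u v, P u -> P v -> P (a *: u + v)) ->
  (forall x, x \in s -> P x) -> forall v, v \in <<s>>%VS -> P v.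
Proof.
move=> P0 PD Ps v /(@coord_span _ _ _ (in_tuple s)) ->.
apply: (big_rec P) => // i x _ Px; apply: PD => //; apply: Ps.
by apply: mem_nth.
Qed.

Lemma monos_supp Fam v : v \in <<monos Fam>>%VS -> forall Y, Y \notin Fam -> v Y = 0.
Proof.
move=> vs Y nY; move: v vs; apply: span_coordP => [|a u v Pu Pv|x].
- by rewrite ffunE.
- by rewrite !ffunE Pu Pv scaler0 addr0.
case/mapP => X; rewrite mem_enum => XF ->; rewrite monoE.
case: eqP => // YX; by move: nY; rewrite YX XF.
Qed.

Lemma monos_spanP Fam v : (forall Y, Y \notin Fam -> v Y = 0) -> v \in <<monos Fam>>%VS.
Proof.
move=> H; rewrite (ext_decomp v); apply: memv_suml => Y _.
case: (boolP (Y \in Fam)) => YF; last by rewrite H // scale0r mem0v.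
by apply: memvZ; apply: memv_span; apply: map_f; rewrite mem_enum.
Qed.

Lemma mono_in_monos Fam X : X \in Fam -> mono F X \in <<monos Fam>>%VS.
Proof. by move=> XF; apply: memv_span; apply: map_f; rewrite mem_enum. Qed.

Lemma wedge_span u (s : seq ext) (U : {vspace ext}) :
  (forall y, y \in s -> wedge u y \in U) -> forall x, x \in <<s>>%VS -> wedge u x \in U.
Proof.
move=> H; apply: span_coordP => [|a x y Px Py|//]; first by rewrite wedge0r mem0v.
by rewrite wedgeDr wedgeZr memvD // memvZ.
Qed.

Lemma wedge_sp_mem w (K : {vspace ext}) x : x \in K -> wedge w x \in wedge_sp w K.
Proof.
move=> xK; apply: (@wedge_span w (vbasis K)).
  by move=> y yb; apply: memv_span; apply: map_f.
by rewrite (span_basis (vbasisP K)).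
Qed.

Lemma free_monos Fam : free (monos Fam).
Proof.
apply/freeP => c Hc i.
have := congr1 (fun f : ext => f (nth set0 (enum Fam) i)) Hc.
rewrite sum_ffunE ffunE (bigD1 i) //= [X in _ + X]big1 => [|j nji].
  rewrite (nth_map set0) ?size_map -?cardE // ffunE monoE eqxx addr0.
  by move=> H; rewrite -[c i]mulr1; exact: H.
rewrite /monos (nth_map set0); last by rewrite -cardE.
rewrite ffunE monoE.
rewrite (nth_uniq _ _ _ (enum_uniq _)); first last.
- by rewrite -cardE ltn_ord.
- by rewrite -cardE ltn_ord.
case: eqP => [/val_inj ij|_]; first by rewrite ij eqxx in nji.
exact: mulr0.
Qed.

Lemma monos_basis Fam : basis_of <<monos Fam>>%VS (monos Fam).
Proof. by rewrite /basis_of eqxx free_monos. Qed.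

End Span.
Section Main.
Variables (F : fieldType) (n k : nat).
Local Notation ext := (ext F n.+2).
Local Notation o0 := (0 : 'I_n.+2).
Local Notation o1 := (1 : 'I_n.+2).
Implicit Types (u v w m : ext) (A B X Y Z S T : {set 'I_n.+2}).

Lemma val_o1 : val o1 = 1%N. Proof. by []. Qed.
Lemma o01 : o0 != o1. Proof. by rewrite -(inj_eq val_inj). Qed.

Lemma ge2E (t : 'I_n.+2) : (2 <= t)%N = (t != o0) && (t != o1).
Proof.
rewrite -!(inj_eq val_inj) val_o1 /=.
by case: t => [[|[|t]] ?].
Qed.

Definition m01 : ext := mono F [set o0; o1].

Lemma wedge_e01 : wedge (evec F o0) (evec F o1) = m01.
Proof.
rewrite /evec wedge_mono2 /wmono.
have -> : [disjoint [set o0] & [set o1]] by rewrite disjoints1 inE eq_sym o01.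
rewrite /m01 /wsign.
have -> : [set p : 'I_n.+2 * 'I_n.+2 | (p.1 \in [set o0]) && (p.2 \in [set o1]) &&
   (p.2 < p.1)%N] = set0.
  by apply/setP => -[a b]; rewrite !inE /=; case: eqP => // ->; rewrite andbF.
by rewrite cards0 expr0 scale1r.
Qed.

Variable L : {vspace ext}.
Hypothesis HLam : (L <= Lam F n.+2 k)%VS.
Hypothesis Hann : forall x, x \in L -> wedge m01 x = 0.
Hypothesis Hshift : forall i j : 'I_n.+2, (2 <= i)%N -> (i < j)%N -> shift_fixed j i L.
Local Notation E12 := <<[seq wedge m01 x | x <- vbasis (Lam F n.+2 (k - 2))]>>%VS.
Hypothesis HE12 : (E12 <= L)%VS.
Hypothesis hk : (2 <= k)%N.

Lemma L_supp m X : m \in L -> #|X| != k -> m X = 0.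
Proof.
move=> mL nX; have : m \in Lam F n.+2 k by apply: (subvP HLam).
move/(@monos_supp F n.+2 [set Y : {set 'I_n.+2} | #|Y| == k]); apply.
by rewrite inE.
Qed.

Lemma L_out m X : m \in L -> o0 \notin X -> o1 \notin X -> m X = 0.
Proof.
move=> mL n0 n1; have := congr1 (fun f : ext => f ([set o0; o1] :|: X)) (Hann _ mL).
rewrite /m01 wedge_monoE subsetUl ffunE.
have -> : ([set o0; o1] :|: X) :\: [set o0; o1] = X.
  apply/setP => t; rewrite !inE.
  case: (boolP (t == o0)) => [/eqP->|_]; first by rewrite (negbTE n0).
  case: (boolP (t == o1)) => [/eqP->|_] //; by rewrite (negbTE n1).
by move/eqP; rewrite mulf_eq0 (negbTE (wsign_neq0 _ _ _ _)) /= => /eqP.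
Qed.

Lemma wedge01_E12 x : x \in Lam F n.+2 (k - 2) -> wedge m01 x \in E12.
Proof.
move=> xL; apply: (@wedge_span _ _ m01 (vbasis (Lam F n.+2 (k - 2)))).
  by move=> y yb; apply: memv_span; exact: map_f.
by rewrite (span_basis (vbasisP _)).
Qed.

Lemma mono_E12 Z : o0 \in Z -> o1 \in Z -> #|Z| = k -> mono F Z \in E12.
Proof.
move=> z0 z1 cZ.
have sub : [set o0; o1] \subset Z by rewrite subUset !sub1set z0 z1.
have dis : [disjoint [set o0; o1] & Z :\: [set o0; o1]].
  by rewrite -setI_eq0; apply/eqP/setP => t; rewrite !inE; case: (_ || _); rewrite ?andbF.
have U : [set o0; o1] :|: Z :\: [set o0; o1] = Z.
  apply/setP => t; rewrite !inE; case: (boolP ((t == o0) || (t == o1))) => //= h.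
  by case/orP: h => /eqP ->.
have := wedge01_E12 (mono F (Z :\: [set o0; o1])).
rewrite /m01 wedge_mono2 /wmono dis U => H.
have H2 : wsign F [set o0; o1] (Z :\: [set o0; o1]) *: mono F Z \in E12.
  apply: H; apply: mono_in_monos; rewrite inE cardsD (setIidPr sub) cards2 o01 cZ.
  by [].
by have := memvZ (wsign F [set o0; o1] (Z :\: [set o0; o1]))^-1 H2;
  rewrite scalerA mulVf ?wsign_neq0 // scale1r.
Qed.

Lemma E12_supp v : (forall X, v X != 0 -> [&& o0 \in X, o1 \in X & #|X| == k]) ->
  v \in E12.
Proof.
move=> H; rewrite (@ext_decomp _ _ v); apply: memv_suml => Y _.
case: (eqVneq (v Y) 0) => [->|nY]; first by rewrite scale0r mem0v.
by case/and3P: (H _ nY) => a b /eqP c; apply: memvZ; apply: mono_E12.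
Qed.

Definition projP (P : pred {set 'I_n.+2}) m : ext :=
  [ffun X => if P X then m X else 0].

Lemma projPE P m X : projP P m X = if P X then m X else 0.
Proof. by rewrite ffunE. Qed.

Lemma projP_comp P Q m : projP P (projP Q m) = projP (fun X => P X && Q X) m.
Proof. by apply/ffunP => X; rewrite !projPE; case: (P X). Qed.

Lemma proj_L (j : 'I_n.+2) b m : (3 <= j)%N -> m \in L ->
  projP (fun X => (j \in X) == b) m \in L.
Proof.
move=> j3 mL.
have i2 : (2 < n.+2)%N by exact: (ltn_trans j3 (ltn_ord j)).
pose i := Ordinal i2.
have nij : i != j by rewrite -(inj_eq val_inj) /=; apply/eqP => e; move: j3; rewrite -e.
have HN := @shift_fixed_in _ _ L j i (@Hshift i j (leqnn 2) j3).
have xL := @shift_x_in _ _ L i j nij HN m mL.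
case: b.
  have -> : projP (fun X => (j \in X) == true) m = m - shift_x j m.
    by apply/ffunP => X; rewrite projPE [in RHS]ffunE [in RHS]ffunE shift_xE; case: (j \in X); rewrite ?subrr ?subr0.
  by rewrite memvB.
have -> : projP (fun X => (j \in X) == false) m = shift_x j m.
  by apply/ffunP => X; rewrite projPE shift_xE; case: (j \in X).
by [].
Qed.

Lemma proj_pattern (J : seq 'I_n.+2) S m : all (fun t : 'I_n.+2 => 3 <= t)%N J -> m \in L ->
  projP (fun X => all (fun t => (t \in X) == (t \in S)) J) m \in L.
Proof.
move=> HJ mL; elim: J HJ => [|t J IH] /=.
  have -> : projP (fun _ => true) m = m by apply/ffunP => X; rewrite projPE.
  by [].
case/andP => t3 HJ.
have -> : projP (fun X => ((t \in X) == (t \in S)) && all (fun t => (t \in X) == (t \in S)) J) m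
  = projP (fun X => (t \in X) == (t \in S)) (projP (fun X => all (fun t => (t \in X) == (t \in S)) J) m).
  by rewrite projP_comp.
exact: proj_L (IH HJ).
Qed.


Lemma set_eq_pattern X S : (forall t, t \in X -> 2 <= t)%N -> (forall t, t \in S -> 2 <= t)%N ->
  (forall t : 'I_n.+2, 3 <= t -> (t \in X) = (t \in S))%N -> #|X| = #|S| -> X = S.
Proof.
move=> HX HS HP cXS.
have v2 : forall t : 'I_n.+2, (2 <= t)%N -> ~~ (3 <= t)%N -> val t = 2%N.
  by move=> t t2 t3; apply/eqP; rewrite eqn_leq t2 andbT leqNgt.
apply/eqP; rewrite eqEcard cXS leqnn andbT.
apply/subsetP => t tX; apply/negPn/negP => tS.
have t3 : ~~ (3 <= t)%N by apply/negP => t3; move: tS; rewrite -HP // tX.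
have : ~~ (S \subset X).
  apply/negP => SX; have : S == X by rewrite eqEcard SX cXS leqnn.
  by move/eqP => SXe; move: tS; rewrite SXe tX.
case/subsetPn => t' t'S t'X.
have t'3 : ~~ (3 <= t')%N by apply/negP => t'3; move: t'X; rewrite HP // t'S.
have tt' : t = t' by apply: val_inj; rewrite (v2 t (HX t tX) t3) (v2 t' (HS t' t'S) t'3).
by move: tS; rewrite tt' t'S.
Qed.

Lemma one_side X S (o o' : 'I_n.+2) : (o = o0 /\ o' = o1) \/ (o = o1 /\ o' = o0) ->
  o \in X -> o' \notin X -> o0 \notin S -> o1 \notin S -> #|X| = k -> #|S| = k.-1 ->
  (forall t : 'I_n.+2, 3 <= t -> (t \in X) = (t \in S))%N -> X = o |: S.
Proof.
move=> Ho oX o'X S0 S1 cX cS HP.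
have oo : forall t, (t == o0) || (t == o1) -> t != o -> t = o'.
  by move=> t; case: Ho => -[-> ->]; case/orP => /eqP -> //; rewrite eqxx.
suff <- : X :\ o = S by rewrite setD1K.
apply: set_eq_pattern.
- move=> t; rewrite !inE => /andP[nto tX]; rewrite ge2E -negb_or; apply/negP => h; have to' := oo t h nto.
  by move: o'X; rewrite -to' tX.
- move=> t tS; rewrite ge2E; apply/andP; split; apply/eqP => e.
  + by move: S0; rewrite -e tS.
  + by move: S1; rewrite -e tS.
- move=> t t3; rewrite !inE HP // andb_idl // => _.
  case: Ho => -[-> _]; rewrite -(inj_eq val_inj) /=; apply/eqP => e; by move: t3; rewrite e.
- by rewrite cS; move: cX; rewrite (cardsD1 o X) oX add1n => <-.
Qed.

Lemma proj_weight m S : m \in L -> o0 \notin S -> o1 \notin S -> #|S| = k.-1 ->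
  projP (fun X => (X == o0 |: S) || (X == o1 |: S)) m \in L.
Proof.
move=> mL S0 S1 cS.
pose J := filter (fun t : 'I_n.+2 => (3 <= t)%N) (enum 'I_n.+2).
have HJ : all (fun t : 'I_n.+2 => 3 <= t)%N J by apply/allP => t; rewrite mem_filter => /andP[].
pose pat := fun X => all (fun t => (t \in X) == (t \in S)) J.
have patP : forall X, pat X -> forall t : 'I_n.+2, (3 <= t)%N -> (t \in X) = (t \in S).
  move=> X /allP pX t t3; apply/eqP; apply: pX; by rewrite mem_filter t3 mem_enum.
have m1L : projP pat m \in L by exact: proj_pattern.
pose m2 := projP (fun X => (o0 \in X) && (o1 \in X)) (projP pat m).
have m2E : m2 \in E12.
  apply: E12_supp => X; rewrite !projPE.
  case: (boolP ((o0 \in X) && (o1 \in X))) => [/andP[a b]|_]; last by rewrite eqxx.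
  case: ifP => _ mX; last by rewrite eqxx in mX.
  rewrite a b /=.
  have [//|cX] := eqVneq #|X| k; by rewrite (L_supp _ _ mL cX) eqxx in mX.
have : projP pat m - m2 \in L by rewrite memvB // (subvP HE12).
suff -> : projP (fun X => (X == o0 |: S) || (X == o1 |: S)) m = projP pat m - m2 by [].
have ne3 : forall t : 'I_n.+2, (3 <= t)%N -> (t != o0) && (t != o1).
  by move=> t t3; rewrite -ge2E; apply: ltnW.
have patS : forall o : 'I_n.+2, (o == o0) || (o == o1) -> pat (o |: S).
  move=> o ho; apply/allP => t; rewrite mem_filter => /andP[t3 _]; rewrite !inE.
  have : t != o by case/orP: ho => /eqP ->; case/andP: (ne3 t t3).
  by move/negbTE ->.
apply/ffunP => X; rewrite /m2 !ffunE.
case: (boolP ((X == o0 |: S) || (X == o1 |: S))) => HX.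
  case/orP: HX => /eqP ->.
    by rewrite patS ?eqxx // !inE eqxx eq_sym (negbTE o01) (negbTE S1) /= subr0.
  by rewrite patS ?eqxx ?orbT // !inE eqxx (negbTE o01) (negbTE S0) /= subr0.
case: ifP => pX; last by rewrite if_same subr0.
case: ifP => b01; first by rewrite subrr.
rewrite subr0; apply/esym/eqP/negPn/negP => mX.
have cX : #|X| = k by apply/eqP; apply: contraR mX => cX; rewrite (L_supp _ _ mL cX).
case: (boolP (o0 \in X)) => x0; case: (boolP (o1 \in X)) => x1.
- by rewrite x0 x1 in b01.
- have := @one_side X S o0 o1 (or_introl (conj erefl erefl)) x0 x1 S0 S1 cX cS (patP X pX).
  by move=> e; rewrite e eqxx in HX.
- have := @one_side X S o1 o0 (or_intror (conj erefl erefl)) x1 x0 S0 S1 cX cS (patP X pX).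
  by move=> e; rewrite e eqxx orbT in HX.
- by rewrite (L_out _ _ mL x0 x1) eqxx in mX.
Qed.

Definition vS (a b : F) S : ext := a *: mono F (o0 |: S) + b *: mono F (o1 |: S).

Lemma vSE a b S Y : vS a b S Y = a * (Y == o0 |: S)%:R + b * (Y == o1 |: S)%:R.
Proof. by rewrite !ffunE. Qed.

Lemma neq01S S : o0 \notin S -> (o0 |: S == o1 |: S) = false.
Proof.
move=> S0; apply/negbTE/negP => /eqP e.
have : o0 \in o1 |: S by rewrite -e setU11.
by rewrite !inE (negbTE o01) (negbTE S0).
Qed.

Lemma vS0 a b S : o0 \notin S -> vS a b S (o0 |: S) = a.
Proof. by move=> S0; rewrite vSE eqxx neq01S // mulr1 mulr0 addr0. Qed.

Lemma vS1 a b S : o0 \notin S -> vS a b S (o1 |: S) = b.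
Proof. by move=> S0; rewrite vSE eqxx eq_sym neq01S // mulr1 mulr0 add0r. Qed.

Definition famP (a b : F) : {set {set 'I_n.+2}} :=
  [set S : {set 'I_n.+2} | [&& o0 \notin S, o1 \notin S, #|S| == k.-1 & vS a b S \in L]].

Lemma wsign_01 (h : 'I_n.+2) (R : {set 'I_n.+2}) : (2 <= h)%N -> o0 \notin R -> o1 \notin R ->
  wsign F [set h] (o0 |: R) = wsign F [set h] (o1 |: R).
Proof.
move=> h2 R0 R1; rewrite /wsign; congr (_ ^+ _).
have E : forall o : 'I_n.+2, (o < h)%N -> o \notin R ->
  #|[set p : 'I_n.+2 * 'I_n.+2 | (p.1 \in [set h]) && (p.2 \in o |: R) && (p.2 < p.1)%N]| =
  (#|[set p : 'I_n.+2 * 'I_n.+2 | (p.1 \in [set h]) && (p.2 \in R) && (p.2 < p.1)%N]|).+1.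
  move=> o oh oR.
  have -> : [set p : 'I_n.+2 * 'I_n.+2 | (p.1 \in [set h]) && (p.2 \in o |: R) && (p.2 < p.1)%N] =
     (h, o) |: [set p : 'I_n.+2 * 'I_n.+2 | (p.1 \in [set h]) && (p.2 \in R) && (p.2 < p.1)%N].
    apply/setP => -[p1 p2]; rewrite !inE /= xpair_eqE.
    by case: (eqVneq p1 h) => [->|] //=; case: (eqVneq p2 o) => [->|] //=; rewrite ?oh.
  by rewrite cardsU1 !inE /= (negbTE oR) andbF.
by rewrite !E //; apply: leq_trans h2.
Qed.

Lemma famP_shifted a b : shifted (famP a b).
Proof.
split.
  move=> S; rewrite inE => /and4P[S0 S1 _ _] h hS; rewrite ge2E.
  by apply/andP; split; apply/eqP => e; [move: S0 | move: S1]; rewrite -e hS.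
move=> S; rewrite inE => /and4P[S0 S1 /eqP cS vL] i j i2 ij jS iS.
have j2 : (2 <= j)%N by apply: leq_trans i2 (ltnW ij).
have nij : i != j by rewrite -(inj_eq val_inj) /= neq_ltn ij.
have nji : j != i by rewrite eq_sym.
have := i2; rewrite ge2E => /andP[i0 i1].
have := j2; rewrite ge2E => /andP[j0 j1].
set S' := S :\ j :|: [set i].
have S'0 : o0 \notin S' by rewrite !inE (negbTE S0) andbF /= eq_sym.
have S'1 : o1 \notin S' by rewrite !inE (negbTE S1) andbF /= eq_sym.
have cS' : #|S'| = k.-1.
  rewrite /S' setUC cardsU1 !inE (negbTE iS) andbF /= -cS (cardsD1 j S) jS.
  by [].
have HN := @shift_fixed_in _ _ L j i (Hshift i j i2 ij).
have zL := @shift_z_in _ _ L i j HN _ vL.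
set z := shift_x j (vS a b S) + wedge (evec F i) (shift_y j (vS a b S)) in zL.
have vout : forall Y, j \notin Y -> vS a b S Y = 0.
  move=> Y jY; rewrite vSE.
  have -> : (Y == o0 |: S) = false.
    by apply/negbTE; apply: contra jY => /eqP ->; rewrite !inE jS orbT.
  have -> : (Y == o1 |: S) = false.
    by apply/negbTE; apply: contra jY => /eqP ->; rewrite !inE jS orbT.
  by rewrite !mulr0 addr0.
have zval : forall o : 'I_n.+2, (o = o0) \/ (o = o1) ->
    z (o |: S') = wsign F [set i] (o |: S :\ j) * (wsign F [set j] (o |: S :\ j) * vS a b S (o |: S)).
  move=> o ho.
  have jo : j != o by case: ho => ->.
  have io : i != o by case: ho => ->.
  rewrite /z ffunE shift_xE.
  have -> : j \in o |: S' = false.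
    by rewrite !inE (negbTE jo) eqxx (negbTE nji).
  rewrite vout; last by rewrite !inE (negbTE jo) eqxx (negbTE nji).
  rewrite add0r wedge_evecE !inE eqxx orbT.
  have -> : (o |: S') :\ i = o |: S :\ j.
    apply/setP => t; rewrite !inE; case: (eqVneq t i) => [->|ti] /=.
      by rewrite (negbTE io) (negbTE iS) andbF.
    by rewrite orbF.
  rewrite shift_yE !inE (negbTE jo) eqxx /=.
  have -> : j |: (o |: S :\ j) = o |: S.
    apply/setP => t; rewrite !inE; case: (eqVneq t j) => [->|tj] /=.
      by rewrite jS orbT.
    by [].
  by rewrite orbT.
have c01 : wsign F [set i] (o0 |: S :\ j) * wsign F [set j] (o0 |: S :\ j) =
           wsign F [set i] (o1 |: S :\ j) * wsign F [set j] (o1 |: S :\ j).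
  have R0 : o0 \notin S :\ j by rewrite !inE (negbTE S0) andbF.
  have R1 : o1 \notin S :\ j by rewrite !inE (negbTE S1) andbF.
  by rewrite (wsign_01 _ _ i2 R0 R1) (wsign_01 _ _ j2 R0 R1).
set c := wsign F [set i] (o0 |: S :\ j) * wsign F [set j] (o0 |: S :\ j).
have cn0 : c != 0 by rewrite mulf_neq0 // wsign_neq0.
have zwL := proj_weight _ _ zL S'0 S'1 cS'.
have zwE : projP (fun X => (X == o0 |: S') || (X == o1 |: S')) z = c *: vS a b S'.
  apply/ffunP => Y; rewrite projPE [RHS]ffunE vSE.
  case: (eqVneq Y (o0 |: S')) => [->|Y0] /=.
    rewrite zval; last by left.
    by rewrite vS0 // mulrA neq01S // mulr1 mulr0 addr0.
  case: (eqVneq Y (o1 |: S')) => [->|Y1] /=.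
    rewrite zval; last by right.
    by rewrite vS1 // mulrA -c01 -/c mulr0 mulr1 add0r.
  by rewrite !mulr0 addr0 scaler0.
rewrite inE S'0 S'1 cS' eqxx /=.
have := memvZ c^-1 zwL; rewrite zwE scalerA mulVf // scale1r.
by [].
Qed.

Local Notation e0 := (evec F o0).
Local Notation e1 := (evec F o1).

Lemma set1_01 : ([set o0] == [set o1]) = false.
Proof.
apply/negbTE/negP => /eqP e; have : o0 \in [set o1] by rewrite -e set11.
by rewrite inE (negbTE o01).
Qed.

Lemma e0_0 : e0 [set o0] = 1. Proof. by rewrite /evec monoE eqxx. Qed.
Lemma e0_1 : e0 [set o1] = 0. Proof. by rewrite /evec monoE eq_sym set1_01. Qed.
Lemma e1_0 : e1 [set o0] = 0. Proof. by rewrite /evec monoE set1_01. Qed.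
Lemma e1_1 : e1 [set o1] = 1. Proof. by rewrite /evec monoE eqxx. Qed.

Lemma e01_neq : e0 != e1.
Proof. by apply/eqP => e; have := e0_0; rewrite e e1_0 => /eqP; rewrite eq_sym oner_eq0. Qed.

Lemma evalDZ u c v X : (u + c *: v) X = u X + c * v X.
Proof. by rewrite !ffunE. Qed.

Definition canon w := (w = e1) \/ (exists c, w = e0 + c *: e1).

Lemma canonE w : canon w ->
  (w = e1 /\ w [set o0] = 0 /\ w [set o1] = 1) \/
  (exists c, [/\ w = e0 + c *: e1, w [set o0] = 1 & w [set o1] = c]).
Proof.
case=> [->|[c ->]]; first by left; rewrite e1_0 e1_1.
right; exists c; split => //; rewrite evalDZ ?e0_0 ?e1_0 ?e0_1 ?e1_1.
- by rewrite mulr0 addr0.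
- by rewrite mulr1 add0r.
Qed.

Lemma wedge_evec_mono (o : 'I_n.+2) S : (o = o0) \/ (o = o1) -> o0 \notin S -> o1 \notin S ->
  wedge (evec F o) (mono F S) = mono F (o |: S).
Proof.
move=> ho S0 S1; rewrite /evec wedge_mono2 /wmono.
have oS : o \notin S by case: ho => ->.
rewrite disjoints1 oS /wsign.
have -> : [set p : 'I_n.+2 * 'I_n.+2 | (p.1 \in [set o]) && (p.2 \in S) && (p.2 < p.1)%N] = set0.
  apply/setP => -[p1 p2]; rewrite !inE /=.
  case: (eqVneq p1 o) => [->|] //=; case: (boolP (p2 \in S)) => //= p2S.
  have : (2 <= p2)%N.
    by rewrite ge2E; apply/andP; split; apply/eqP => e; [move: S0|move: S1]; rewrite -e p2S.
  by case: ho => ->; rewrite ?val_o1 /=; case: (val p2) => [|[|]].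
by rewrite cards0 expr0 scale1r.
Qed.

Lemma wedge_canon w S : canon w -> o0 \notin S -> o1 \notin S ->
  wedge w (mono F S) = vS (w [set o0]) (w [set o1]) S.
Proof.
move=> cw S0 S1; case: (canonE _ cw) => [[-> [-> ->]]|[c [-> -> ->]]].
  rewrite wedge_evec_mono //; last by right.
  by rewrite /vS scale0r add0r scale1r.
rewrite wedgeDl wedgeZl !wedge_evec_mono //; [|by right|by left].
by rewrite /vS scale1r.
Qed.

Lemma canon_mem w : canon w -> w \in <<[:: e0; e1]>>%VS.
Proof.
case=> [->|[c ->]]; first by apply: memv_span; rewrite !inE eqxx orbT.
by rewrite memvD ?memvZ // memv_span // !inE eqxx ?orbT.
Qed.

Lemma canon_neq0 w : canon w -> w != 0.
Proof.
move=> cw; apply/eqP => w0; case: (canonE _ cw) => [[_ [_ h]]|[c [_ h _]]];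
  by move: h; rewrite w0 ffunE => /eqP; rewrite eq_sym oner_eq0.
Qed.

Lemma canon_free x y : canon x -> canon y -> x != y -> free [:: x; y].
Proof.
move=> cx cy nxy; rewrite free_cons seq1_free canon_neq0 // andbT span_seq1.
apply/vlineP => -[t xy].
have v0 := congr1 (fun f : ext => f [set o0]) xy.
have v1 := congr1 (fun f : ext => f [set o1]) xy.
move: v0 v1; rewrite /= [in RHS]ffunE [in X in _ -> X]ffunE.
case: (canonE _ cx) => [[ex [-> ->]]|[c [ex -> ->]]];
case: (canonE _ cy) => [[ey [-> ->]]|[c' [ey -> ->]]].
- by move: nxy; rewrite ex ey eqxx.
- move=> h0 h1; have ht : t = 0 by rewrite -[t]mulr1; exact: (esym h0).
  by move: h1; rewrite ht scale0r => /eqP; rewrite oner_eq0.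
- by rewrite scaler0 => /eqP; rewrite oner_eq0.
- move=> h0 h1; have ht : t = 1 by rewrite -[t]mulr1; exact: (esym h0).
  by move: nxy; rewrite ex ey h1 ht scale1r eqxx.
Qed.

Lemma vS_scale t a b S : vS (t * a) (t * b) S = t *: vS a b S.
Proof. by rewrite /vS scalerDr !scalerA. Qed.

Lemma famP_all x y S : canon x -> canon y -> x != y ->
  S \in famP (x [set o0]) (x [set o1]) -> S \in famP (y [set o0]) (y [set o1]) ->
  forall a b, S \in famP a b.
Proof.
move=> cx cy nxy; rewrite !inE => /and4P[S0 S1 cS vx] /and4P[_ _ _ vy] a b.
rewrite inE S0 S1 cS /=.
suff [u0L u1L] : mono F (o0 |: S) \in L /\ mono F (o1 |: S) \in L.
  by rewrite /vS memvD // memvZ.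
have v01 : vS 0 1 S = mono F (o1 |: S) by rewrite /vS scale0r add0r scale1r.
have from1 : forall c, mono F (o1 |: S) \in L -> vS 1 c S \in L ->
    mono F (o0 |: S) \in L /\ mono F (o1 |: S) \in L.
  move=> c h1 h2; split => //.
  have -> : mono F (o0 |: S) = vS 1 c S - c *: mono F (o1 |: S) by rewrite /vS scale1r addrK.
  by rewrite memvB // memvZ.
case: (canonE _ cx) => [[ex [e0x e1x]]|[c [ex e0x e1x]]];
case: (canonE _ cy) => [[ey [e0y e1y]]|[c' [ey e0y e1y]]]; move: vx vy; rewrite ?e0x ?e1x ?e0y ?e1y.
- by move: nxy; rewrite ex ey eqxx.
- by rewrite v01 => h1 h2; apply: (from1 c').
- by rewrite v01 => h2 h1; apply: (from1 c).
- move=> h1 h2; apply: (from1 c) => //.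
  have cc : c - c' != 0.
    by rewrite subr_eq0; apply: contra nxy => /eqP e; rewrite ex ey e.
  have -> : mono F (o1 |: S) = (c - c')^-1 *: (vS 1 c S - vS 1 c' S).
    rewrite /vS opprD addrACA subrr add0r -scalerBl scalerA mulVf //.
    by rewrite scale1r.
  by rewrite memvZ // memvB.
Qed.

Lemma shifted_setI (A1 A2 : {set {set 'I_n.+2}}) : shifted A1 -> shifted A2 -> shifted (A1 :&: A2).
Proof.
move=> [h1 s1] [h2 s2]; split.
  by move=> S; rewrite inE => /andP[SA _]; exact: h1.
move=> S; rewrite inE => /andP[SA1 SA2] i j i2 ij jS iS.
by rewrite inE (s1 _ SA1 _ _ i2 ij jS iS) (s2 _ SA2 _ _ i2 ij jS iS).
Qed.

Definition cw (a b : F) : ext := if a == 0 then e1 else e0 + (b / a) *: e1.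

Lemma cw_canon a b : canon (cw a b).
Proof. by rewrite /cw; case: ifP => _; [left | right; exists (b / a)]. Qed.

Definition cands : seq ext :=
  allpairs (fun (x : ext) (Y : {set 'I_n.+2}) => cw (x (o0 |: Y)) (x (o1 |: Y)))
    (vbasis L) (enum [set: {set 'I_n.+2}]).

Definition ws : seq ext := e0 :: e1 :: [seq c <- undup cands | (c != e0) && (c != e1)].

Lemma ws_canon x : x \in ws -> canon x.
Proof.
rewrite !inE => /orP[/eqP->|/orP[/eqP->|]]; first by right; exists 0; rewrite scale0r addr0.
  by left.
rewrite mem_filter mem_undup => /andP[_ /allpairsP[[b0 T0] [_ _ ->]]].
exact: cw_canon.
Qed.

Lemma ws_uniq : uniq ws.
Proof.
rewrite /= !inE negb_or e01_neq /= !mem_filter !eqxx /= andbF /=.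
by rewrite filter_uniq // undup_uniq.
Qed.

Lemma cands_ws x : x \in cands -> x \in ws.
Proof.
move=> xc; rewrite inE; case: eqP => //= /eqP x0; rewrite inE; case: eqP => //= /eqP x1.
by rewrite mem_filter mem_undup xc x0 x1.
Qed.

Definition Kf (w : ext) : {vspace ext} := <<monos F n.+2 (famP (w [set o0]) (w [set o1]))>>%VS.

Local Notation A := (@LamAvoid F n.+2 [set o0; o1] k.-1).

Lemma Kf_A w : (Kf w <= A)%VS.
Proof.
apply/span_subvP => x /mapP [S]; rewrite mem_enum inE => /and4P[S0 S1 cS _] ->.
apply: mono_in_monos; rewrite inE cS /=.
rewrite -setI_eq0; apply/eqP/setP => t; rewrite !inE.
case: (eqVneq t o0) => [->|_]; first by rewrite (negbTE S0).
case: (eqVneq t o1) => [->|_]; first by rewrite (negbTE S1).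
by rewrite andbF.
Qed.

Lemma wedge_Kf_L w : canon w -> (wedge_sp w (Kf w) <= L)%VS.
Proof.
move=> cw; apply/span_subvP => y /mapP [x xb ->].
apply: (@wedge_span _ _ w (monos F n.+2 (famP (w [set o0]) (w [set o1])))); last exact: vbasis_mem.
move=> z /mapP [S]; rewrite mem_enum inE => /and4P[S0 S1 _ vL] ->.
by rewrite wedge_canon.
Qed.

Lemma projS_vS b S : o0 \notin S ->
  projP (fun X => (X == o0 |: S) || (X == o1 |: S)) b = vS (b (o0 |: S)) (b (o1 |: S)) S.
Proof.
move=> S0; apply/ffunP => Y; rewrite projPE vSE.
case: (eqVneq Y (o0 |: S)) => [->|Y0] /=; first by rewrite neq01S // mulr1 mulr0 addr0.
case: (eqVneq Y (o1 |: S)) => [->|Y1] /=; first by rewrite mulr1 mulr0 add0r.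
by rewrite !mulr0 addr0.
Qed.

Lemma decomp b : b \in L ->
  b = projP (fun X => (o0 \in X) && (o1 \in X)) b +
      \sum_(S : {set 'I_n.+2} | [&& o0 \notin S, o1 \notin S & #|S| == k.-1])
        projP (fun X => (X == o0 |: S) || (X == o1 |: S)) b.
Proof.
move=> bL; apply/ffunP => X; rewrite ffunE sum_ffunE projPE.
under eq_bigr => S _ do rewrite projPE.
case: (eqVneq (b X) 0) => [->|bX].
  by rewrite if_same big1 ?addr0 // => S _; rewrite if_same.
have cX : #|X| = k by apply/eqP; apply: contraR bX => cX; rewrite (L_supp _ _ bL cX).
case: (boolP (o0 \in X)) => x0; case: (boolP (o1 \in X)) => x1 /=.
- rewrite big1 ?addr0 // => S /and3P[S0 S1 _].
  have -> : (X == o0 |: S) = false.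
    by apply/negbTE/eqP => e; move: x1; rewrite e !inE eq_sym (negbTE o01) (negbTE S1).
  have -> : (X == o1 |: S) = false.
    by apply/negbTE/eqP => e; move: x0; rewrite e !inE (negbTE o01) (negbTE S0).
  by [].
- rewrite add0r (bigD1 (X :\ o0)) /=; last first.
    rewrite !inE eqxx (negbTE x1) andbF /=.
    by move: cX; rewrite (cardsD1 o0 X) x0 add1n => <-.
  rewrite setD1K // eqxx /= big1 ?addr0 // => S /andP[/and3P[S0 S1 _] nS].
  have -> : (X == o0 |: S) = false.
    by apply/negbTE/eqP => e; move: nS; rewrite e setU1K // eqxx.
  have -> : (X == o1 |: S) = false.
    by apply/negbTE/eqP => e; move: x1; rewrite e setU11.
  by [].
- rewrite add0r (bigD1 (X :\ o1)) /=; last first.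
    rewrite !inE eqxx (negbTE x0) andbF /=.
    by move: cX; rewrite (cardsD1 o1 X) x1 add1n => <-.
  rewrite setD1K // eqxx orbT /= big1 ?addr0 // => S /andP[/and3P[S0 S1 _] nS].
  have -> : (X == o0 |: S) = false.
    by apply/negbTE/eqP => e; move: x0; rewrite e setU11.
  have -> : (X == o1 |: S) = false.
    by apply/negbTE/eqP => e; move: nS; rewrite e setU1K // eqxx.
  by [].
- by rewrite (L_out _ _ bL x0 x1) eqxx in bX.
Qed.

Lemma main_thm :
  exists (m : nat) (w : 'I_m -> ext) (K : 'I_m -> {vspace ext}),
    [/\ (forall i, w i \in <<[:: e0; e1]>>%VS /\ w i != 0) /\
          (forall i j, i != j -> free [:: w i; w j]),
        (forall i, (K i <= A)%VS),
        L = (E12 + \sum_(i < m) wedge_sp (w i) (K i))%VS,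
        (forall i j, i != j -> (K i :&: K j)%VS = (A :&: \bigcap_(h < m) K h)%VS) &
        (forall i, shifted_monomial_basis (K i)) /\
        shifted_monomial_basis (A :&: \bigcap_(h < m) K h)%VS].
Proof.
pose m := size ws.
pose w := fun i : 'I_m => nth 0 ws i.
pose K := fun i : 'I_m => Kf (w i).
have wws : forall i, w i \in ws by move=> i; apply: mem_nth.
have wc : forall i, canon (w i) by move=> i; apply: ws_canon.
have wneq : forall i j, i != j -> w i != w j.
  by move=> i j nij; rewrite /w nth_uniq ?ws_uniq.
have KI : forall i j, i != j -> (K i :&: K j)%VS = (A :&: \bigcap_(h < m) K h)%VS.
  move=> i j nij; apply/eqP; rewrite eqEsubv; apply/andP; split.
  - rewrite subv_cap; apply/andP; split.
      exact: subv_trans (capvSl _ _) (Kf_A _).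
    apply/subv_bigcapP => h _; apply/subvP => x; rewrite memv_cap => /andP[xi xj].
    apply: monos_spanP => Y nY.
    case: (boolP (Y \in famP (w i [set o0]) (w i [set o1]))) => Yi; last exact: (monos_supp _ _ _ _ xi).
    case: (boolP (Y \in famP (w j [set o0]) (w j [set o1]))) => Yj; last exact: (monos_supp _ _ _ _ xj).
    by rewrite (famP_all _ _ _ (wc i) (wc j) (wneq i j nij) Yi Yj) in nY.
  - rewrite subv_cap; apply/andP; split; apply: subv_trans (capvSr _ _) _.
      exact: (bigcapv_inf i).
    exact: (bigcapv_inf j).
have m2 : (1 < m)%N by [].
pose i0 := Ordinal (ltnW m2); pose i1 := Ordinal m2.
exists m, w, K; split.
- split; first by move=> i; split; [apply: canon_mem | apply: canon_neq0].
  by move=> i j nij; apply: canon_free => //; apply: wneq.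
- by move=> i; apply: Kf_A.
- apply/eqP; rewrite eqEsubv; apply/andP; split; last first.
    rewrite subv_add HE12 /=; apply/subv_sumP => h _; exact: wedge_Kf_L.
  rewrite -{1}(span_basis (vbasisP L)); apply/span_subvP => b bb.
  have bL := vbasis_mem bb.
  rewrite (decomp _ bL); apply: memv_add.
    apply: E12_supp => X; rewrite projPE.
    case: (boolP ((o0 \in X) && (o1 \in X))) => [/andP[x0 x1] bX|_]; last by rewrite eqxx.
    rewrite x0 x1 /=; have [//|cX] := eqVneq #|X| k.
    by rewrite (L_supp _ _ bL cX) eqxx in bX.
  apply: memv_suml => S /and3P[S0 S1 /eqP cS].
  have vL := proj_weight _ _ bL S0 S1 cS.
  rewrite projS_vS // in vL *.
  set a := b (o0 |: S) in vL *; set c := b (o1 |: S) in vL *.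
  have cin : cw a c \in ws.
    apply: cands_ws; apply/allpairsP; exists (b, S); split => //.
    by rewrite mem_enum inE.
  have hlt : (index (cw a c) ws < m)%N by rewrite index_mem.
  pose h := Ordinal hlt.
  have wh : w h = cw a c by rewrite /w /= nth_index.
  apply: (subvP (sumv_sup h _ (subvv _))) => //.
  rewrite /K wh /Kf /cw; case: eqP => [a0|/eqP an0].
    rewrite e1_0 e1_1.
    have [c0|cn0] := eqVneq c 0.
      by rewrite a0 c0 /vS !scale0r addr0 mem0v.
    have SF : S \in famP 0 1.
      rewrite inE S0 S1 cS eqxx /=.
      have -> : vS 0 1 S = c^-1 *: vS a c S by rewrite -vS_scale a0 mulr0 mulVf.
      by rewrite memvZ.
    have -> : vS a c S = c *: wedge e1 (mono F S).
      rewrite wedge_canon //; last by left.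
      by rewrite e1_0 e1_1 -vS_scale a0 mulr0 mulr1.
    by apply: memvZ; apply: wedge_sp_mem; exact: mono_in_monos.
  rewrite !evalDZ e0_0 e1_0 e0_1 e1_1 mulr0 addr0 mulr1 add0r.
  have SF : S \in famP 1 (c / a).
    rewrite inE S0 S1 cS eqxx /=.
    have -> : vS 1 (c / a) S = a^-1 *: vS a c S by rewrite -vS_scale mulVf // mulrC.
    by rewrite memvZ.
  have -> : vS a c S = a *: wedge (e0 + (c / a) *: e1) (mono F S).
    rewrite wedge_canon //; last by right; exists (c / a).
    rewrite !evalDZ e0_0 e1_0 e0_1 e1_1 mulr0 addr0 mulr1 add0r -vS_scale mulr1.
    by rewrite mulrC divfK.
  by apply: memvZ; apply: wedge_sp_mem; exact: mono_in_monos.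
- exact: KI.
- split.
    move=> i; exists (famP (w i [set o0]) (w i [set o1])); split.
      exact: monos_basis.
    exact: famP_shifted.
  rewrite -(KI i0 i1) //.
  exists (famP 1 0 :&: famP 0 1); split; last exact: shifted_setI (famP_shifted _ _) (famP_shifted _ _).
  have -> : (K i0 :&: K i1)%VS = <<monos F n.+2 (famP 1 0 :&: famP 0 1)>>%VS.
    rewrite /K /w /Kf /= e0_0 e0_1 e1_0 e1_1.
    apply/vspaceP => x; rewrite memv_cap; apply/andP/idP => [[x1 x2]|xs].
      apply: monos_spanP => Y; rewrite inE negb_and => /orP[hY|hY].
        exact: (monos_supp _ _ _ _ x1).
      exact: (monos_supp _ _ _ _ x2).
    by split; apply: monos_spanP => Y nY; apply: (monos_supp _ _ _ _ xs); rewrite inE negb_and nY ?orbT.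
  exact: monos_basis.
Qed.

End Main.

Theorem corollary3p16 (F : fieldType) (hchar : (2%:R : F) != 0) (n k : nat)
  (hk : (2 <= k)%N) (L : {vspace ext F n.+2}) :
  let e1 := @evec F _ (0 : 'I_n.+2) in
  let e2 := @evec F _ (1 : 'I_n.+2) in
  let E12 := <<[seq wedge (wedge e1 e2) x | x <- vbasis (Lam F n.+2 (k - 2))]>>%VS in
  let A := @LamAvoid F n.+2 [set (0 : 'I_n.+2); 1] k.-1 in
  (L <= Lam F n.+2 k)%VS ->
  (E12 <= L)%VS ->
  (forall x, x \in L -> wedge (wedge e1 e2) x = 0) ->
  (forall i j : 'I_n.+2, (2 <= i)%N -> (i < j)%N -> shift_fixed j i L) ->
  exists (m : nat) (w : 'I_m -> ext F n.+2) (K : 'I_m -> {vspace ext F n.+2}),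
    [/\ (forall i, w i \in <<[:: e1; e2]>>%VS /\ w i != 0) /\
          (forall i j, i != j -> free [:: w i; w j]),
        (forall i, (K i <= A)%VS),
        L = (E12 + \sum_(i < m) wedge_sp (w i) (K i))%VS,
        (forall i j, i != j -> (K i :&: K j)%VS = (A :&: \bigcap_(h < m) K h)%VS) &
        (forall i, shifted_monomial_basis (K i)) /\
        shifted_monomial_basis (A :&: \bigcap_(h < m) K h)%VS].
Proof.
move=> e1 e2 E12 A HLam HE12 Hann Hshift.
rewrite /E12 /A /e1 /e2 wedge_e01 in HE12 Hann *.
exact: (@main_thm F n k L HLam Hann Hshift HE12).
Qed.
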